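(* Let $S$ and $T$ be left fairly amenable semigroups. Then the direct product $S\times T$ (with componentwise multiplication) is left fairly amenable. The same holds with ''right'' in place of ''left''.
   Context: For a semigroup $U$, $s\in U$, $A\subseteq U$: $s$ acts injectively on the left (right) of $A$ if $a\mapsto sa$ ($a\mapsto as$) is injective on $A$. A finitely-additive probability measure on $U$ is $\mu:\mathcal P(U)\to[0,1]$ with $\mu(U)=1$, additive on disjoint sets; it is left fairly invariant if $\mu(sA)=\mu(A)$ whenever $s$ acts injectively on the left of $A$ (right fairly invariant analogously with $As$). $U$ is left (right) fairly amenable if it admits a left (right) fairly invariant finitely-additive probability measure. *)

(* Defs.v *)
From Stdlib Require Import Reals.
Open Scope R_scope.
Set Implicit Arguments.

Definition is_semigroup (U : Type) (op : U -> U -> U) : Prop :=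
  forall x y z, op x (op y z) = op (op x y) z.

Definition disjoint_sets (U : Type) (A B : U -> Prop) : Prop :=
  forall x, A x -> B x -> False.

Definition set_union (U : Type) (A B : U -> Prop) : U -> Prop :=
  fun x => A x \/ B x.

Definition fa_prob_measure (U : Type) (mu : (U -> Prop) -> R) : Prop :=
  (forall A, 0 <= mu A <= 1) /\
  mu (fun _ => True) = 1 /\
  (forall A B, disjoint_sets A B -> mu (set_union A B) = mu A + mu B).

Definition left_translate (U : Type) (op : U -> U -> U) (s : U) (A : U -> Prop)
  : U -> Prop := fun y => exists a, A a /\ y = op s a.
Definition right_translate (U : Type) (op : U -> U -> U) (s : U) (A : U -> Prop)
  : U -> Prop := fun y => exists a, A a /\ y = op a s.

Definition acts_inj_left (U : Type) (op : U -> U -> U) (s : U) (A : U -> Prop) : Prop :=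
  forall a b, A a -> A b -> op s a = op s b -> a = b.
Definition acts_inj_right (U : Type) (op : U -> U -> U) (s : U) (A : U -> Prop) : Prop :=
  forall a b, A a -> A b -> op a s = op b s -> a = b.

Definition left_fairly_invariant (U : Type) (op : U -> U -> U)
  (mu : (U -> Prop) -> R) : Prop :=
  forall s A, acts_inj_left op s A -> mu (left_translate op s A) = mu A.
Definition right_fairly_invariant (U : Type) (op : U -> U -> U)
  (mu : (U -> Prop) -> R) : Prop :=
  forall s A, acts_inj_right op s A -> mu (right_translate op s A) = mu A.

Definition left_fairly_amenable (U : Type) (op : U -> U -> U) : Prop :=
  exists mu, fa_prob_measure mu /\ left_fairly_invariant op mu.
Definition right_fairly_amenable (U : Type) (op : U -> U -> U) : Prop :=
  exists mu, fa_prob_measure mu /\ right_fairly_invariant op mu.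

Definition prod_op (S T : Type) (opS : S -> S -> S) (opT : T -> T -> T)
  (x y : S * T) : S * T := (opS (fst x) (fst y), opT (snd x) (snd y)).

(* Main.v *)
Require Import Defs.
From Stdlib Require Import Reals ClassicalEpsilon FunctionalExtensionality PropExtensionality Classical Lra Lia List.
Open Scope R_scope.

Lemma set_ext {U : Type} (A B : U -> Prop) : (forall x, A x <-> B x) -> A = B.
Proof. intro H; apply functional_extensionality; intro x; apply propositional_extensionality; auto. Qed.




Lemma mu_ext {U} (mu : (U -> Prop) -> R) (A B : U -> Prop) :
  (forall x, A x <-> B x) -> mu A = mu B.
Proof. intro H; rewrite (set_ext A B H); reflexivity. Qed.

Lemma mu_empty {U} (mu : (U -> Prop) -> R) : fa_prob_measure mu -> mu (fun _ => False) = 0.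
Proof.
  intros [H1 [H2 H3]].
  assert (E := H3 (fun _ : U => False) (fun _ => False) (fun x a b => a)).
  unfold set_union in E.
  rewrite (mu_ext mu (fun x => False \/ False) (fun _ => False)) in E by tauto. lra.
Qed.

Lemma mu_empty' {U} (mu : (U -> Prop) -> R) (A : U -> Prop) : fa_prob_measure mu ->
  (forall x, ~ A x) -> mu A = 0.
Proof. intros H HA. rewrite (mu_ext mu A (fun _ => False)) by (intro x; split; [apply HA|tauto]).
  apply mu_empty; auto. Qed.

Lemma mu_split {U} (mu : (U -> Prop) -> R) (A D : U -> Prop) : fa_prob_measure mu ->
  mu A = mu (fun x => A x /\ D x) + mu (fun x => A x /\ ~ D x).
Proof.
  intros [H1 [H2 H3]].
  rewrite <- H3 by (intros x [_ a] [_ b]; tauto).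
  apply mu_ext. intro x; unfold set_union. destruct (classic (D x)); tauto.
Qed.

Lemma mu_disj {U} (mu : (U -> Prop) -> R) (A B : U -> Prop) : fa_prob_measure mu ->
  (forall x, A x -> B x -> False) -> mu (fun x => A x \/ B x) = mu A + mu B.
Proof. intros [H1 [H2 H3]] H. apply (H3 A B H). Qed.

Lemma mu_mono {U} (mu : (U -> Prop) -> R) (A B : U -> Prop) : fa_prob_measure mu ->
  (forall x, A x -> B x) -> mu A <= mu B.
Proof.
  intros H HAB. rewrite (mu_split mu B A H).
  rewrite (mu_ext mu (fun x => B x /\ A x) A) by (intro x; split; [tauto| intro; split; auto]).
  destruct H as [H1 _]. destruct (H1 (fun x => B x /\ ~ A x)). lra.
Qed.

Lemma mu_bnd {U} (mu : (U -> Prop) -> R) (A : U -> Prop) : fa_prob_measure mu -> 0 <= mu A <= 1.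
Proof. intros [H _]; apply H. Qed.

Definition ind {U} (A : U -> Prop) (x : U) : R :=
  if excluded_middle_informative (A x) then 1 else 0.

Fixpoint ev {U} (L : list (R * (U -> Prop))) (x : U) : R :=
  match L with nil => 0 | (c, A) :: L' => c * ind A x + ev L' x end.

Fixpoint Phi {U} (mu : (U -> Prop) -> R) (L : list (R * (U -> Prop))) : R :=
  match L with nil => 0 | (c, A) :: L' => c * mu A + Phi mu L' end.

Definition restr {U} (L : list (R * (U -> Prop))) (D : U -> Prop) :=
  map (fun p => (fst p, fun x => snd p x /\ D x)) L.

Lemma ind_in {U} (A : U -> Prop) x : A x -> ind A x = 1.
Proof. unfold ind; destruct excluded_middle_informative; tauto. Qed.
Lemma ind_out {U} (A : U -> Prop) x : ~ A x -> ind A x = 0.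
Proof. unfold ind; destruct excluded_middle_informative; tauto. Qed.

Lemma ev_restr_in {U} L (D : U -> Prop) x : D x -> ev (restr L D) x = ev L x.
Proof.
  intro Hx; induction L as [|[c A] L IH]; simpl; auto.
  rewrite IH. destruct (classic (A x)).
  - rewrite !ind_in by tauto; auto.
  - rewrite !ind_out by tauto; auto.
Qed.

Lemma ev_restr_out {U} L (D : U -> Prop) x : ~ D x -> ev (restr L D) x = 0.
Proof.
  intro Hx; induction L as [|[c A] L IH]; simpl; auto.
  rewrite IH, ind_out by tauto; ring.
Qed.

Lemma Phi_restr_ext {U} mu L (D D' : U -> Prop) : (forall x, D x <-> D' x) ->
  Phi mu (restr L D) = Phi mu (restr L D').
Proof.
  intro H; induction L as [|[c A] L IH]; simpl; auto.
  rewrite IH; f_equal; f_equal; apply mu_ext; intro x; rewrite H; tauto.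
Qed.

Lemma Phi_restr_T {U} mu (L : list (R * (U -> Prop))) : Phi mu (restr L (fun _ => True)) = Phi mu L.
Proof.
  induction L as [|[c A] L IH]; simpl; auto.
  rewrite IH; f_equal; f_equal; apply mu_ext; intro x; tauto.
Qed.

Lemma Phi_split {U} mu L (D E : U -> Prop) : fa_prob_measure mu ->
  Phi mu (restr L D) = Phi mu (restr L (fun x => D x /\ E x)) + Phi mu (restr L (fun x => D x /\ ~ E x)).
Proof.
  intro Hm; induction L as [|[c A] L IH]; simpl; [ring|].
  rewrite IH. rewrite (mu_split mu (fun x => A x /\ D x) E Hm).
  rewrite (mu_ext mu (fun x => (A x /\ D x) /\ E x) (fun x => A x /\ D x /\ E x)) by tauto.
  rewrite (mu_ext mu (fun x => (A x /\ D x) /\ ~ E x) (fun x => A x /\ D x /\ ~ E x)) by tauto.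
  ring.
Qed.

Lemma positivity {U} mu (Hm : fa_prob_measure mu) (L : list (R * (U -> Prop))) :
  forall c D, (forall x, D x -> 0 <= c + ev L x) -> 0 <= c * mu D + Phi mu (restr L D).
Proof.
  induction L as [|[c1 A1] L IH]; intros c D H; simpl.
  - destruct (classic (exists x, D x)) as [[x Dx]|N].
    + specialize (H x Dx); simpl in H. destruct (mu_bnd mu D Hm). nra.
    + rewrite (mu_empty' mu D Hm) by (intros x Dx; apply N; eauto). lra.
  - assert (IH1 := IH (c + c1) (fun x => D x /\ A1 x)).
    assert (IH2 := IH c (fun x => D x /\ ~ A1 x)).
    assert (h1 : forall x, D x /\ A1 x -> 0 <= c + c1 + ev L x).
    { intros x [Dx Ax]; specialize (H x Dx); simpl in H; rewrite ind_in in H; auto; lra. }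
    assert (h2 : forall x, D x /\ ~ A1 x -> 0 <= c + ev L x).
    { intros x [Dx Ax]; specialize (H x Dx); simpl in H; rewrite ind_out in H; auto; lra. }
    specialize (IH1 h1); specialize (IH2 h2).
    rewrite (Phi_split mu L D A1 Hm).
    rewrite (mu_split mu D A1 Hm).
    rewrite (mu_ext mu (fun x => A1 x /\ D x) (fun x => D x /\ A1 x)) by tauto.
    lra.
Qed.

Lemma pos_Phi {U} mu (Hm : fa_prob_measure mu) (L : list (R * (U -> Prop))) :
  (forall x, 0 <= ev L x) -> 0 <= Phi mu L.
Proof.
  intro H. assert (P := positivity mu Hm L 0 (fun _ => True)).
  rewrite Phi_restr_T in P. assert (0 <= 0 * mu (fun _ => True) + Phi mu L) by (apply P; intros; specialize (H x); lra). lra.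
Qed.

Definition negL {U} (L : list (R * (U -> Prop))) := map (fun p => (- fst p, snd p)) L.

Lemma ev_app {U} (L1 L2 : list (R * (U -> Prop))) x : ev (L1 ++ L2) x = ev L1 x + ev L2 x.
Proof. induction L1 as [|[c A] L IH]; simpl; [ring| rewrite IH; ring]. Qed.
Lemma Phi_app {U} mu (L1 L2 : list (R * (U -> Prop))) : Phi mu (L1 ++ L2) = Phi mu L1 + Phi mu L2.
Proof. induction L1 as [|[c A] L IH]; simpl; [ring| rewrite IH; ring]. Qed.
Lemma ev_neg {U} (L : list (R * (U -> Prop))) x : ev (negL L) x = - ev L x.
Proof. induction L as [|[c A] L IH]; simpl; [ring| rewrite IH; ring]. Qed.
Lemma Phi_neg {U} mu (L : list (R * (U -> Prop))) : Phi mu (negL L) = - Phi mu L.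
Proof. induction L as [|[c A] L IH]; simpl; [ring| rewrite IH; ring]. Qed.

Lemma Phi_mono {U} mu (Hm : fa_prob_measure mu) (L1 L2 : list (R * (U -> Prop))) :
  (forall x, ev L1 x <= ev L2 x) -> Phi mu L1 <= Phi mu L2.
Proof.
  intro H. assert (P := pos_Phi mu Hm (L2 ++ negL L1)).
  rewrite Phi_app, Phi_neg in P. enough (0 <= Phi mu L2 + - Phi mu L1) by lra.
  apply P; intro x; rewrite ev_app, ev_neg; specialize (H x); lra.
Qed.

Lemma Phi_split1 {U} mu (Hm : fa_prob_measure mu) (L : list (R * (U -> Prop))) E :
  Phi mu L = Phi mu (restr L E) + Phi mu (restr L (fun x => ~ E x)).
Proof.
  rewrite <- (Phi_restr_T mu L) at 1. rewrite (Phi_split mu L _ E Hm).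
  f_equal; apply Phi_restr_ext; tauto.
Qed.

Definition adm {U} (h : U -> R) L := forall x, ev L x <= h x /\ ev L x <= 1.
Definition Eset {U} (mu : (U -> Prop) -> R) (h : U -> R) := fun r => exists L, adm h L /\ r = Phi mu L.
Definition Integ {U} (mu : (U -> Prop) -> R) (h : U -> R) : R := epsilon (inhabits 0) (is_lub (Eset mu h)).

Lemma ev_one {U} (x : U) : ev ((1, fun _ : U => True) :: nil) x = 1.
Proof. simpl; rewrite ind_in by auto; ring. Qed.
Lemma Phi_one {U} (mu : (U -> Prop) -> R) : fa_prob_measure mu -> Phi mu ((1, fun _ : U => True) :: nil) = 1.
Proof. intros [_ [H _]]; simpl; rewrite H; ring. Qed.

Lemma Integ_lub {U} mu (Hm : fa_prob_measure mu) (h : U -> R) : (forall x, 0 <= h x) -> is_lub (Eset mu h) (Integ mu h).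
Proof.
  intro H0; unfold Integ; apply epsilon_spec.
  destruct (completeness (Eset mu h)) as [m Hm'].
  - exists 1; intros r [L [HL ->]]. rewrite <- (Phi_one mu Hm). apply Phi_mono; auto.
    intro x; rewrite ev_one; apply HL.
  - exists (Phi mu nil), nil; split; auto.
    intro x; simpl; split; [apply H0|lra].
  - eauto.
Qed.

Lemma Integ_ge {U} mu (Hm : fa_prob_measure mu) (h : U -> R) L :
  (forall x, 0 <= h x) -> adm h L -> Phi mu L <= Integ mu h.
Proof. intros H0 HL. apply (Integ_lub mu Hm h H0). exists L; auto. Qed.

Lemma Integ_le {U} mu (Hm : fa_prob_measure mu) (h : U -> R) b :
  (forall x, 0 <= h x) -> (forall L, adm h L -> Phi mu L <= b) -> Integ mu h <= b.
Proof. intros H0 HL. apply (Integ_lub mu Hm h H0). intros r [L [HL' ->]]; auto. Qed.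

Lemma Integ_ub_list {U} mu (Hm : fa_prob_measure mu) (h : U -> R) L' :
  (forall x, 0 <= h x) -> (forall x, h x <= ev L' x) -> Integ mu h <= Phi mu L'.
Proof.
  intros H0 H. apply Integ_le; auto. intros L HL. apply Phi_mono; auto.
  intro x; specialize (HL x); specialize (H x); lra.
Qed.

Lemma Integ_nonneg {U} mu (Hm : fa_prob_measure mu) (h : U -> R) :
  (forall x, 0 <= h x) -> 0 <= Integ mu h.
Proof. intro H0. change 0 with (Phi mu (@nil (R * (U -> Prop)))). apply Integ_ge; auto.
  intro x; simpl; split; [apply H0|lra]. Qed.

Lemma Integ_ext {U} mu (h k : U -> R) : (forall x, h x = k x) -> Integ mu h = Integ mu k.
Proof. intro H; rewrite (functional_extensionality h k H); auto. Qed.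

Lemma Integ_one {U} mu (Hm : fa_prob_measure mu) : Integ mu (fun _ : U => 1) = 1.
Proof.
  apply Rle_antisym.
  - apply Rle_trans with (Phi mu ((1, fun _ : U => True) :: nil)); [|rewrite (Phi_one mu Hm); lra].
    apply Integ_ub_list; auto; intro x; [lra| rewrite ev_one; lra].
  - apply Rle_trans with (Phi mu ((1, fun _ : U => True) :: nil)); [rewrite (Phi_one mu Hm); lra|].
    apply Integ_ge; auto. intro; lra.
    intro x; rewrite ev_one; lra.
Qed.

Fixpoint apprL {U} (h : U -> R) (n m : nat) : list (R * (U -> Prop)) :=
  match m with O => nil | S m' => (/ INR n, fun x => INR (S m') / INR n <= h x) :: apprL h n m' end.

Lemma apprL_bnd {U} (h : U -> R) n x : (0 < n)%nat -> 0 <= h x -> forall m,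
  ev (apprL h n m) x <= Rmin (h x) (INR m / INR n) /\
  Rmin (h x - / INR n) (INR m / INR n) <= ev (apprL h n m) x.
Proof.
  intros Hn H0. assert (Hn' : 0 < INR n) by (apply lt_0_INR; auto).
  induction m as [|m IH].
  - simpl. unfold Rdiv. rewrite Rmult_0_l. rewrite Rmin_right by auto.
    assert (0 < / INR n) by (apply Rinv_0_lt_compat; auto).
    split; [lra|]. unfold Rmin; destruct Rle_dec; lra.
  - cbn [apprL ev].
    assert (E : INR (S m) / INR n = INR m / INR n + / INR n) by (rewrite S_INR; field; lra).
    rewrite E. clear E.
    set (a := INR m / INR n) in *. set (d := / INR n) in *.
    assert (0 < d) by (apply Rinv_0_lt_compat; auto).
    destruct (Rle_dec (a + d) (h x)) as [Hle|Hlt].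
    + rewrite ind_in by auto.
      rewrite Rmin_right by lra. destruct IH as [IH1 IH2]. split.
      * unfold Rmin in IH1; destruct Rle_dec; lra.
      * unfold Rmin in IH2 |- *; destruct Rle_dec; destruct Rle_dec; lra.
    + rewrite ind_out by auto.
      destruct IH as [IH1 IH2]. split.
      * unfold Rmin in IH1 |- *; destruct Rle_dec; destruct Rle_dec; lra.
      * unfold Rmin in IH2 |- *; destruct Rle_dec; destruct Rle_dec; lra.
Qed.

Lemma apprL_full {U} (h : U -> R) n x : (0 < n)%nat -> 0 <= h x <= 1 ->
  ev (apprL h n n) x <= h x /\ h x - / INR n <= ev (apprL h n n) x.
Proof.
  intros Hn H. destruct (apprL_bnd h n x Hn (proj1 H) n) as [A B].
  assert (Hn' : 0 < INR n) by (apply lt_0_INR; auto).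
  replace (INR n / INR n) with 1 in * by (field; lra).
  assert (0 < / INR n) by (apply Rinv_0_lt_compat; auto).
  unfold Rmin in *; destruct Rle_dec; destruct Rle_dec; lra.
Qed.

Lemma Integ_add {U} mu (Hm : fa_prob_measure mu) (h1 h2 : U -> R) :
  (forall x, 0 <= h1 x) -> (forall x, 0 <= h2 x) -> (forall x, h1 x + h2 x <= 1) ->
  Integ mu (fun x => h1 x + h2 x) = Integ mu h1 + Integ mu h2.
Proof.
  intros P1 P2 Hs.
  assert (P12 : forall x, 0 <= h1 x + h2 x) by (intro x; specialize (P1 x); specialize (P2 x); lra).
  apply Rle_antisym.
  - apply Rle_plus_epsilon. intros eps Heps.
    destruct (archimed_cor1 (eps / 2)) as [n [Hn1 Hn2]]; [lra|].
    assert (Hn' : 0 < INR n) by (apply lt_0_INR; auto).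
    set (L := apprL h1 n n ++ apprL h2 n n ++ (2 / INR n, fun _ => True) :: nil).
    apply Rle_trans with (Phi mu L).
    + apply Integ_ub_list; auto. intro x. unfold L; rewrite !ev_app. simpl.
      rewrite ind_in by auto.
      assert (B1 : h1 x <= 1) by (specialize (Hs x); specialize (P2 x); lra).
      assert (B2 : h2 x <= 1) by (specialize (Hs x); specialize (P1 x); lra).
      assert (A1 := apprL_full h1 n x Hn2 (conj (P1 x) B1)).
      assert (A2 := apprL_full h2 n x Hn2 (conj (P2 x) B2)).
      unfold Rdiv; lra.
    + unfold L; rewrite !Phi_app. simpl. rewrite (proj1 (proj2 Hm)).
      assert (I1 : Phi mu (apprL h1 n n) <= Integ mu h1).
      { apply Integ_ge; auto. intro x.
        assert (B1 : h1 x <= 1) by (specialize (Hs x); specialize (P2 x); lra).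
        destruct (apprL_full h1 n x Hn2 (conj (P1 x) B1)) as [a _]. split; lra. }
      assert (I2 : Phi mu (apprL h2 n n) <= Integ mu h2).
      { apply Integ_ge; auto. intro x.
        assert (B2 : h2 x <= 1) by (specialize (Hs x); specialize (P1 x); lra).
        destruct (apprL_full h2 n x Hn2 (conj (P2 x) B2)) as [a _]. split; lra. }
      unfold Rdiv in *. lra.
  - assert (K : forall L1 L2, adm h1 L1 -> adm h2 L2 -> Phi mu L1 + Phi mu L2 <= Integ mu (fun x => h1 x + h2 x)).
    { intros L1 L2 A1 A2. rewrite <- Phi_app. apply Integ_ge; auto. intro x. rewrite ev_app.
      specialize (A1 x); specialize (A2 x); specialize (Hs x); lra. }
    assert (K2 : forall L2, adm h2 L2 -> Integ mu h1 + Phi mu L2 <= Integ mu (fun x => h1 x + h2 x)).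
    { intros L2 A2. enough (Integ mu h1 <= Integ mu (fun x => h1 x + h2 x) - Phi mu L2) by lra.
      apply Integ_le; auto. intros L1 A1. specialize (K L1 L2 A1 A2). lra. }
    enough (Integ mu h2 <= Integ mu (fun x => h1 x + h2 x) - Integ mu h1) by lra.
    apply Integ_le; auto. intros L2 A2. specialize (K2 L2 A2). lra.
Qed.

Definition fimg {U} (f : U -> U) (A : U -> Prop) : U -> Prop := fun y => exists a, A a /\ y = f a.

Lemma Phi_restr_neg {U} mu (Hm : fa_prob_measure mu) (L : list (R * (U -> Prop))) D :
  (forall x, D x -> ev L x <= 0) -> Phi mu (restr L D) <= 0.
Proof.
  intro H. change 0 with (Phi mu (@nil (R * (U -> Prop)))). apply Phi_mono; auto.
  intro x; simpl. destruct (classic (D x)).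
  - rewrite ev_restr_in; auto.
  - rewrite ev_restr_out; auto; lra.
Qed.

Lemma Integ_transfer {U} mu (Hm : fa_prob_measure mu) (f : U -> U) (X : U -> Prop) (h k : U -> R) :
  (forall a b, X a -> X b -> f a = f b -> a = b) ->
  (forall Y, (forall a, Y a -> X a) -> mu (fimg f Y) = mu Y) ->
  (forall x, 0 <= h x) -> (forall x, 0 <= k x) ->
  (forall x, ~ X x -> h x = 0) ->
  (forall a, X a -> k (f a) = h a) ->
  (forall y, ~ fimg f X y -> k y = 0) ->
  Integ mu k = Integ mu h.
Proof.
  intros Hinj Hinv Ph Pk Hh0 Hkh Hk0.
  apply Rle_antisym.
  - apply Integ_le; auto. intros L HL.
    set (L' := map (fun p => (fst p, fun a => X a /\ snd p (f a))) L).
    assert (ev_in : forall a, X a -> ev L' a = ev L (f a)).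
    { intros a Xa. unfold L'; clear - Xa. induction L as [|[c A] L IH]; simpl; auto.
      rewrite IH. destruct (classic (A (f a))).
      - rewrite !ind_in; auto.
      - rewrite !ind_out; tauto. }
    assert (ev_out : forall a, ~ X a -> ev L' a = 0).
    { intros a Xa. unfold L'; clear - Xa. induction L as [|[c A] L IH]; simpl; auto.
      rewrite IH, ind_out by tauto; ring. }
    assert (PL' : Phi mu L' = Phi mu (restr L (fimg f X))).
    { unfold L'; clear - Hinv Hinj. induction L as [|[c A] L IH]; simpl; auto.
      rewrite IH. f_equal. f_equal. rewrite <- (Hinv (fun a => X a /\ A (f a))) by tauto.
      apply mu_ext. intro y; split.
      - intros [a [[Xa Aa] ->]]; split; auto; exists a; auto.
      - intros [Ay [a [Xa ->]]]; exists a; auto. }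
    rewrite (Phi_split1 mu Hm L (fimg f X)).
    assert (N := Phi_restr_neg mu Hm L (fun x => ~ fimg f X x)).
    assert (N' : Phi mu (restr L (fun x => ~ fimg f X x)) <= 0).
    { apply N. intros x Hx. rewrite <- (Hk0 x Hx). apply HL. }
    rewrite <- PL'.
    assert (Phi mu L' <= Integ mu h); [|lra].
    apply Integ_ge; auto. intro a. destruct (classic (X a)) as [Xa|Xa].
    + rewrite ev_in, <- Hkh by auto. apply HL.
    + rewrite ev_out by auto. split; [apply Ph|lra].
  - apply Integ_le; auto. intros L HL.
    set (L' := map (fun p => (fst p, fimg f (snd p))) (restr L X)).
    assert (ev_in : forall a, X a -> ev L' (f a) = ev L a).
    { intros a Xa. unfold L'; clear - Xa Hinj. induction L as [|[c A] L IH]; simpl; auto.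
      rewrite IH. destruct (classic (A a)).
      - rewrite !ind_in; auto. exists a; auto.
      - rewrite !ind_out; auto. intros [a' [[Aa' Xa'] E]].
        apply Hinj in E; auto. subst; auto. }
    assert (ev_out : forall y, ~ fimg f X y -> ev L' y = 0).
    { intros y Hy. unfold L'; clear - Hy. induction L as [|[c A] L IH]; simpl; auto.
      rewrite IH, ind_out; [ring|]. intros [a [[_ Xa] E]]; apply Hy; exists a; auto. }
    assert (PL' : Phi mu L' = Phi mu (restr L X)).
    { unfold L'; clear - Hinv. induction L as [|[c A] L IH]; simpl; auto.
      rewrite IH. rewrite Hinv by tauto. auto. }
    rewrite (Phi_split1 mu Hm L X).
    assert (N' : Phi mu (restr L (fun x => ~ X x)) <= 0).
    { apply Phi_restr_neg; auto. intros x Hx. rewrite <- (Hh0 x Hx). apply HL. }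
    rewrite <- PL'.
    assert (Phi mu L' <= Integ mu k); [|lra].
    apply Integ_ge; auto. intro y. destruct (classic (fimg f X y)) as [[a [Xa ->]]|Hy].
    + rewrite ev_in, Hkh by auto. apply HL.
    + rewrite ev_out by auto. split; [apply Pk|lra].
Qed.

Definition pick {U} (f : U -> U) (a0 : U) (Y : U -> Prop) (y : U) : U :=
  epsilon (inhabits a0) (fun a => Y a /\ f a = y).
Definition tr {U} (f : U -> U) (a0 : U) (Y : U -> Prop) : U -> Prop :=
  fun a => Y a /\ pick f a0 Y (f a) = a.
Fixpoint Rn {U} (f : U -> U) (a0 : U) (Y0 : U -> Prop) (n : nat) : U -> Prop :=
  match n with O => Y0 | S n => fun a => Rn f a0 Y0 n a /\ ~ tr f a0 (Rn f a0 Y0 n) a end.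

Lemma pick_spec {U} (f : U -> U) a0 Y a : Y a ->
  Y (pick f a0 Y (f a)) /\ f (pick f a0 Y (f a)) = f a.
Proof. intro Ya. unfold pick. apply (epsilon_spec (inhabits a0) (fun a' => Y a' /\ f a' = f a)). eauto. Qed.

Lemma tr_pick {U} (f : U -> U) a0 Y a : Y a -> tr f a0 Y (pick f a0 Y (f a)).
Proof. intro Ya. destruct (pick_spec f a0 Y a Ya) as [A B]. split; auto. rewrite B; auto. Qed.

Lemma tr_inj {U} (f : U -> U) a0 Y a b : tr f a0 Y a -> tr f a0 Y b -> f a = f b -> a = b.
Proof. intros [_ Ha] [_ Hb] E. rewrite <- Ha, <- Hb, E; auto. Qed.

Lemma Rn_sub {U} (f : U -> U) a0 Y0 n m a : (n <= m)%nat -> Rn f a0 Y0 m a -> Rn f a0 Y0 n a.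
Proof. induction 1; simpl; auto. intros [H1 _]; auto. Qed.

Lemma Rn_Y0 {U} (f : U -> U) a0 Y0 n a : Rn f a0 Y0 n a -> Y0 a.
Proof. intro H; apply (Rn_sub f a0 Y0 0 n a); auto with arith. Qed.

Section Prod.
Variables (S T : Type) (opS : S -> S -> S) (opT : T -> T -> T)
  (muS : (S -> Prop) -> R) (muT : (T -> Prop) -> R).
Hypotheses (HS : fa_prob_measure muS) (HT : fa_prob_measure muT)
  (IS : left_fairly_invariant opS muS) (IT : left_fairly_invariant opT muT).

Definition hC (C : S * T -> Prop) (a : S) : R := muT (fun b => C (a, b)).
Definition nu (C : S * T -> Prop) : R := Integ muS (hC C).

Lemma hC_bnd C a : 0 <= hC C a <= 1.
Proof. apply (mu_bnd muT _ HT). Qed.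

Lemma hC_nonneg C a : 0 <= hC C a.
Proof. apply hC_bnd. Qed.

Lemma nu_ext (A B : S * T -> Prop) : (forall p, A p <-> B p) -> nu A = nu B.
Proof. intro H; rewrite (set_ext A B H); auto. Qed.

Lemma nu_add (A B : S * T -> Prop) : (forall p, A p -> B p -> False) ->
  nu (fun p => A p \/ B p) = nu A + nu B.
Proof.
  intro H. unfold nu.
  rewrite (Integ_ext muS (hC (fun p => A p \/ B p)) (fun a => hC A a + hC B a)).
  - apply Integ_add; auto; try apply hC_nonneg.
    intro a. unfold hC. rewrite <- (mu_disj muT (fun b => A (a,b)) (fun b => B (a,b)) HT) by eauto.
    apply mu_bnd; auto.
  - intro a. unfold hC. apply mu_disj; eauto.
Qed.

Lemma nu_bnd C : 0 <= nu C <= 1.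
Proof.
  split; unfold nu.
  - apply Integ_nonneg; auto; apply hC_nonneg.
  - apply Rle_trans with (Phi muS ((1, fun _ : S => True) :: nil)); [|rewrite (Phi_one muS HS); lra].
    apply Integ_ub_list; auto; [apply hC_nonneg|]. intro a; rewrite ev_one; apply hC_bnd.
Qed.

Lemma nu_fa : fa_prob_measure nu.
Proof.
  split; [exact nu_bnd|split].
  - unfold nu. rewrite (Integ_ext muS _ (fun _ => 1)); [apply Integ_one; auto|].
    intro a; unfold hC. apply (proj1 (proj2 HT)).
  - intros A B H. apply nu_add. exact H.
Qed.

Lemma nu_ub_set C (Y : S -> Prop) : (forall a b, C (a, b) -> Y a) -> nu C <= muS Y.
Proof.
  intro H. unfold nu.
  apply Rle_trans with (Phi muS ((1, Y) :: nil)); [|simpl; lra].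
  apply Integ_ub_list; auto; [apply hC_nonneg|]. intro a; simpl.
  destruct (classic (Y a)).
  - rewrite ind_in by auto. assert (K := hC_bnd C a). lra.
  - rewrite ind_out by auto. unfold hC. rewrite mu_empty'; eauto. lra.
Qed.

Lemma nu_ub_eps C eps (W : S -> Prop) : 0 <= eps ->
  (forall a, hC C a <= eps \/ W a) -> nu C <= eps + muS W.
Proof.
  intros He H. unfold nu.
  apply Rle_trans with (Phi muS ((eps, fun _ => True) :: (1, W) :: nil)).
  - apply Integ_ub_list; auto; [apply hC_nonneg|]. intro a; simpl.
    rewrite ind_in by auto. assert (K := hC_bnd C a).
    destruct (H a) as [h|h].
    + destruct (classic (W a)); [rewrite ind_in by auto| rewrite ind_out by auto]; lra.
    + rewrite ind_in by auto; lra.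
  - simpl. rewrite (proj1 (proj2 HS)). lra.
Qed.

Section Inv.
Variables (s : S) (t : T) (C : S * T -> Prop).
Hypothesis Hinj : acts_inj_left (prod_op opS opT) (s, t) C.

Lemma inj2 a b a' b' : C (a, b) -> C (a', b') -> opS s a = opS s a' -> opT t b = opT t b' ->
  a = a' /\ b = b'.
Proof.
  intros H1 H2 E1 E2. assert (E := Hinj (a, b) (a', b') H1 H2).
  unfold prod_op in E; simpl in E. rewrite E1, E2 in E. specialize (E eq_refl). inversion E; auto.
Qed.

Definition X : S -> Prop := fun a => exists b, C (a, b).
Definition Rm n := Rn (opS s) s X n.
Definition Bm n := tr (opS s) s (Rm n).
Definition Cj n : S * T -> Prop := fun p => C p /\ Rm n (fst p).
Definition Pn n : S * T -> Prop := fun p => C p /\ Bm n (fst p).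
Lemma Rm_S n a : Rm (Datatypes.S n) a <-> Rm n a /\ ~ Bm n a.
Proof. unfold Rm, Bm; simpl; tauto. Qed.

Definition Tr (D : S * T -> Prop) := left_translate (prod_op opS opT) (s, t) D.

Lemma Tr_iff D y b : Tr D (y, b) <-> exists a b', D (a, b') /\ y = opS s a /\ b = opT t b'.
Proof.
  unfold Tr, left_translate, prod_op; split.
  - intros [[a b'] [Hd E]]; simpl in E. inversion E; subst. eauto.
  - intros [a [b' [Hd [-> ->]]]]. exists (a, b'); auto.
Qed.

Lemma fimg_inv (Y : S -> Prop) : (forall a, Y a -> Bm 0 a \/ True) ->
  True.
Proof. auto. Qed.

Lemma muS_inv (Y : S -> Prop) : (forall a b, Y a -> Y b -> opS s a = opS s b -> a = b) ->
  muS (fimg (opS s) Y) = muS Y.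
Proof. intro H. apply (IS s Y). intros a b; apply H. Qed.

Lemma transfer_piece n : nu (Tr (Pn n)) = nu (Pn n).
Proof.
  unfold nu.
  apply (Integ_transfer muS HS (opS s) (Bm n)).
  - intros a b Ha Hb E; apply (tr_inj _ _ _ _ _ Ha Hb E).
  - intros Y HY. apply muS_inv. intros a b Ha Hb E. apply (tr_inj _ _ _ _ _ (HY a Ha) (HY b Hb) E).
  - apply hC_nonneg.
  - apply hC_nonneg.
  - intros a Ha. unfold hC. apply mu_empty'; auto. intros b [_ Hb]; auto.
  - intros a Ha. unfold hC.
    rewrite (mu_ext muT _ (left_translate opT t (fun b => Pn n (a, b)))).
    + apply IT. intros b b' Hb Hb' E. apply (inj2 a b a b'); auto; apply Hb || apply Hb'.
    + intro y. rewrite Tr_iff. split.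
      * intros [a' [b' [Hp [E1 E2]]]]. assert (a' = a).
        { apply (tr_inj (opS s) s (Rm n)); auto. apply Hp. }
        subst a'. exists b'; auto.
      * intros [b' [Hp E]]. exists a, b'; auto.
  - intros y Hy. unfold hC. apply mu_empty'; auto. intros b Hb. apply Tr_iff in Hb.
    destruct Hb as [a [b' [[_ Hb] [E _]]]]. apply Hy. exists a; auto.
Qed.

Lemma step n : nu (Tr (Cj n)) - nu (Cj n) = nu (Tr (Cj (Datatypes.S n))) - nu (Cj (Datatypes.S n)).
Proof.
  assert (E1 : nu (Cj n) = nu (Pn n) + nu (Cj (Datatypes.S n))).
  { rewrite <- nu_add.
    - apply nu_ext. intro p. unfold Cj, Pn. cbv beta. rewrite Rm_S. destruct (classic (Bm n (fst p))) as [Hb|Hb].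
      + split; [tauto|]. intros [[Cp Bp]|[Cp [Rp _]]]; split; auto. apply Bp.
      + tauto.
    - intros p [_ Bp] [_ Hr]; destruct (proj1 (Rm_S n _) Hr); tauto. }
  assert (E2 : nu (Tr (Cj n)) = nu (Tr (Pn n)) + nu (Tr (Cj (Datatypes.S n)))).
  { rewrite <- nu_add.
    - apply nu_ext. intros [y b]. rewrite !Tr_iff. split.
      + intros [a [b' [[Cp Rp] E]]]. destruct (classic (Bm n a)).
        * left. exists a, b'. split; auto. split; auto.
        * right. exists a, b'. split; auto. split; auto. apply Rm_S. split; auto.
      + intros [H|H]; destruct H as [a [b' [Hp E]]]; exists a, b'; split; auto;
          destruct Hp as [Cp Hp]; split; auto; [apply Hp| apply Hp].
    - intros [y b] H1 H2. rewrite Tr_iff in H1, H2.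
      destruct H1 as [a [b' [[Cp Bp] [F1 F2]]]]. destruct H2 as [a2 [b2 [[Cp2 Rp2] [F3 F4]]]].
      assert (G1 : opS s a = opS s a2) by congruence.
      assert (G2 : opT t b' = opT t b2) by congruence.
      destruct (inj2 a b' a2 b2 Cp Cp2 G1 G2) as [<- _].
      destruct (proj1 (Rm_S n a) Rp2); auto. }
  rewrite E1, E2, transfer_piece. ring.
Qed.

Lemma telescope n : nu (Tr C) - nu C = nu (Tr (Cj n)) - nu (Cj n).
Proof.
  induction n as [|n IH].
  - assert (E : forall p, C p <-> Cj 0 p).
    { intros [a b]; unfold Cj; simpl; split; [intro H; split; auto; exists b; auto| tauto]. }
    rewrite (nu_ext C (Cj 0) E). rewrite (nu_ext (Tr C) (Tr (Cj 0))); [ring|].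
    intros [y b]; rewrite !Tr_iff.
    split; intros [a [b' [H1 H2]]]; exists a, b'; split; auto; apply E; auto.
  - rewrite IH. apply step.
Qed.

Lemma RA M : nu (Tr (Cj M)) <= muS (fimg (opS s) (Rm M)).
Proof.
  apply nu_ub_set. intros y b H. rewrite Tr_iff in H. destruct H as [a [b' [[_ H] [E _]]]].
  exists a; auto.
Qed.

Definition Zs M j := fun a => Bm j a /\ fimg (opS s) (Rm M) (opS s a).

Lemma Z_meas M j : (j <= M)%nat -> muS (Zs M j) = muS (fimg (opS s) (Rm M)).
Proof.
  intro Hj. rewrite <- muS_inv.
  - apply mu_ext. intro y. split.
    + intros [a [[_ Hf] ->]]; auto.
    + intros [a [Ra ->]]. assert (Rj : Rm j a) by (apply (Rn_sub _ _ _ j M); auto).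
      destruct (pick_spec (opS s) s (Rm j) a Rj) as [_ E].
      exists (pick (opS s) s (Rm j) (opS s a)). split; [|auto].
      split; [apply tr_pick; auto|]. rewrite E. exists a; auto.
  - intros a b [Ha _] [Hb _] E. apply (tr_inj _ _ _ _ _ Ha Hb E).
Qed.

Lemma RB M : INR M * muS (fimg (opS s) (Rm M)) <= 1.
Proof.
  set (v := muS (fimg (opS s) (Rm M))).
  set (Uu := fun m a => exists j, (j < m)%nat /\ Zs M j a).
  assert (K : forall m, (m <= M)%nat -> muS (Uu m) = INR m * v).
  { induction m as [|m IH]; intro Hm.
    - simpl. rewrite Rmult_0_l. apply mu_empty'; auto. intros a [j [Hj _]]. inversion Hj.
    - rewrite (mu_ext muS (Uu (Datatypes.S m)) (fun a => Uu m a \/ Zs M m a)).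
      + rewrite mu_disj; auto.
        * rewrite IH by lia. rewrite Z_meas by lia. rewrite S_INR. fold v. ring.
        * intros a [j [Hj [Bj _]]] [Bm' _].
          assert (R1 : Rm (Datatypes.S j) a) by (apply (Rn_sub _ _ _ (Datatypes.S j) m); [lia| apply (proj1 Bm')]).
          destruct (proj1 (Rm_S j a) R1) as [_ NB]. apply NB. exact Bj.
      + intro a; unfold Uu; split.
        * intros [j [Hj Zj]]. destruct (Nat.eq_dec j m) as [->|Hne]; [right; auto| left; exists j; split; auto; lia].
        * intros [[j [Hj Zj]]|Zm]; [exists j; split; auto; lia| exists m; split; auto]. }
  rewrite <- (K M) by lia. apply mu_bnd; auto.
Qed.

Lemma RC M eps : 0 <= eps ->
  nu (Cj M) <= eps + muS (fun a => Rm M a /\ eps <= hC C a).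
Proof.
  intro He. apply nu_ub_eps; auto. intro a.
  destruct (classic (Rm M a)) as [Ra|Ra].
  - assert (E : hC (Cj M) a = hC C a).
    { unfold hC. apply mu_ext. intro b; unfold Cj; simpl; tauto. }
    rewrite E. destruct (Rle_dec eps (hC C a)); [right; split; auto| left; lra].
  - left. unfold hC. rewrite mu_empty'; auto. intros b [_ Hb]; auto.
Qed.

Section RDs.
Variables (M N : nat) (eps : R).
Hypothesis Heps : 1 < (INR N + 1) * eps.
Definition W := fun a => Rm M a /\ eps <= hC C a.
Definition Rw n := Rn (opS s) s W n.
Definition Bw n := tr (opS s) s (Rw n).
Definition V n a := fun b => exists a', W a' /\ ~ Rw n a' /\ opS s a' = opS s a /\ C (a', b).

Lemma V_grow n a : Rw n a -> INR n * eps <= muT (V n a).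
Proof.
  revert a; induction n as [|n IH]; intros a Ha.
  - simpl. rewrite Rmult_0_l. apply mu_bnd; auto.
  - destruct Ha as [Ha NB]. specialize (IH a Ha).
    set (p := pick (opS s) s (Rw n) (opS s a)).
    destruct (pick_spec (opS s) s (Rw n) a Ha) as [Rp Ep]. fold p in Rp, Ep.
    assert (Bp : Bw n p) by (apply tr_pick; auto).
    assert (Wp : W p) by (exact (Rn_Y0 (opS s) s W n p Rp)).
    assert (Hsub : muT (fun b => V n a b \/ C (p, b)) <= muT (V (Datatypes.S n) a)).
    { apply mu_mono; auto. intros b [[a' [Wa' [NR [E Cb]]]]|Cb].
      - unfold V. exists a'. split; [auto|]. split; [|auto]. intros [R' _]; auto.
      - unfold V. exists p. split; [auto|]. split; [|auto]. intros [_ NB']; auto. }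
    rewrite mu_disj in Hsub; auto.
    + destruct Wp as [_ Wp]. unfold hC in Wp. rewrite S_INR. lra.
    + intros b [a' [Wa' [NR [E Cb]]]] Cpb.
      destruct (inj2 a' b p b) as [-> _]; auto; congruence.
Qed.

Lemma Rw_empty a : ~ Rw N a.
Proof.
  intro Ha. assert (G := V_grow N a Ha).
  assert (Wa : W a) by (exact (Rn_Y0 (opS s) s W N a Ha)).
  assert (D : muT (fun b => V N a b \/ C (a, b)) = muT (V N a) + muT (fun b => C (a, b))).
  { apply mu_disj; auto. intros b [a' [Wa' [NR [E Cb]]]] Cab.
    destruct (inj2 a' b a b) as [-> _]; auto. }
  assert (B := mu_bnd muT (fun b => V N a b \/ C (a, b)) HT).
  destruct Wa as [_ Wa]. unfold hC in Wa.
  assert (Heps' : 1 < INR N * eps + eps) by (rewrite Rmult_plus_distr_r, Rmult_1_l in Heps; exact Heps).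
  set (x := INR N * eps) in *. lra.
Qed.

Lemma RD : muS W <= INR N * muS (fimg (opS s) (Rm M)).
Proof.
  set (v := muS (fimg (opS s) (Rm M))).
  assert (K : forall n, muS W <= INR n * v + muS (Rw n)).
  { induction n as [|n IH].
    - change (Rw 0) with W. change (INR 0) with 0. lra.
    - assert (E : muS (Rw n) = muS (Bw n) + muS (Rw (Datatypes.S n))).
      { rewrite (mu_split muS (Rw n) (Bw n) HS). f_equal.
        apply mu_ext. intro a; split; [tauto|]. intro H; split; auto. apply H. }
      assert (Bv : muS (Bw n) <= v).
      { unfold v. rewrite <- muS_inv.
        - apply mu_mono; auto. intros y [a [Ba ->]]. exists a; split; auto.
          destruct Ba as [Ra _]. apply (Rn_Y0 (opS s) s W n a) in Ra. apply Ra.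
        - intros a b Ha Hb E'. apply (tr_inj _ _ _ _ _ Ha Hb E'). }
      rewrite S_INR. lra. }
  specialize (K N). rewrite (mu_empty' muS (Rw N) HS Rw_empty) in K. lra.
Qed.
End RDs.

Lemma inv_bound N : (0 < N)%nat -> Rabs (nu (Tr C) - nu C) <= 3 / INR N.
Proof.
  intro HN. assert (HN' : 0 < INR N) by (apply lt_0_INR; auto).
  set (M := (N * N)%nat). set (eps := / INR N).
  rewrite (telescope M).
  assert (Hv := RB M). assert (Ha := RA M).
  assert (He : 0 <= eps) by (unfold eps; left; apply Rinv_0_lt_compat; auto).
  assert (Hc := RC M eps He).
  assert (Hq : 1 < (INR N + 1) * eps).
  { unfold eps. replace ((INR N + 1) * / INR N) with (1 + / INR N) by (field; lra).
    assert (0 < / INR N) by (apply Rinv_0_lt_compat; auto). lra. }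
  assert (Hd := RD M N eps Hq).
  unfold W in Hd.
  assert (A1 := nu_bnd (Tr (Cj M))). assert (A2 := nu_bnd (Cj M)).
  set (v := muS (fimg (opS s) (Rm M))) in *.
  assert (v0 : 0 <= v) by apply mu_bnd, HS.
  assert (HM : INR M = INR N * INR N) by (unfold M; apply mult_INR).
  rewrite HM in Hv.
  assert (Hv' : INR N * v <= / INR N).
  { apply Rmult_le_reg_l with (INR N); auto. field_simplify; lra. }
  assert (Hv'' : v <= / INR N).
  { assert (1 <= INR N) by (apply (le_INR 1); lia). nra. }
  unfold Rabs; destruct Rcase_abs; unfold eps in *; unfold Rdiv; lra.
Qed.

Lemma nu_invariant : nu (Tr C) = nu C.
Proof.
  enough (Rabs (nu (Tr C) - nu C) <= 0).
  { assert (0 <= Rabs (nu (Tr C) - nu C)) by apply Rabs_pos.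
    unfold Rabs in *; destruct Rcase_abs; lra. }
  apply Rle_plus_epsilon. intros e He.
  destruct (archimed_cor1 (e / 3)) as [N [H1 H2]]; [lra|].
  assert (B := inv_bound N H2). unfold Rdiv in *. lra.
Qed.
End Inv.

Lemma nu_left_inv : left_fairly_invariant (prod_op opS opT) nu.
Proof. intros [s t] C H. apply (nu_invariant s t C H). Qed.

End Prod.

Lemma left_case (S T : Type) (opS : S -> S -> S) (opT : T -> T -> T) :
  left_fairly_amenable opS -> left_fairly_amenable opT ->
  left_fairly_amenable (prod_op opS opT).
Proof.
  intros [muS [HS IS]] [muT [HT IT]].
  exists (nu S T muS muT). split.
  - apply nu_fa; auto.
  - apply nu_left_inv; auto.
Qed.

Theorem mainTheorem11 (S T : Type) (opS : S -> S -> S) (opT : T -> T -> T)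
  (hS : is_semigroup opS) (hT : is_semigroup opT) :
  (left_fairly_amenable opS -> left_fairly_amenable opT ->
     left_fairly_amenable (prod_op opS opT)) /\
  (right_fairly_amenable opS -> right_fairly_amenable opT ->
     right_fairly_amenable (prod_op opS opT)).
Proof.
  split.
  - apply left_case.
  - intros HS HT.
    exact (left_case S T (fun x y => opS y x) (fun x y => opT y x) HS HT).
Qed.
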